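(* Let $R$ be a commutative ring with identity, $\mathcal S$ an associative $R$-algebra with identity, $\mathcal M$ a $2$-torsion free bimodule over $\mathcal S$, $\delta$ a derivation on $\mathcal S$ and $f:\mathcal S\to\mathcal M$ a bimodule homomorphism over $\mathcal S$. If $D:\mathcal S\to\mathcal M$ is a Jordan $(\delta,f)$-derivation on $\mathcal M$ and $x,y\in\mathcal S$ satisfy $xy=yx$, then $D(xy)=D(x)y+f(x)\delta(y)$.
   Context: A derivation on $\mathcal S$ is an additive map $\delta$ with $\delta(ab)=\delta(a)b+a\delta(b)$. An additive map $D:\mathcal S\to\mathcal M$ is a Jordan $(\delta,f)$-derivation if $D(x^2)=D(x)x+f(x)\delta(x)$ for all $x\in\mathcal S$. $\mathcal M$ is $2$-torsion free if $2m=0$ implies $m=0$. *)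

(* Defs.v *)
From mathcomp Require Import all_boot all_order all_algebra.
Set Implicit Arguments. Unset Strict Implicit. Unset Printing Implicit Defensive.
Import GRing.Theory.
Local Open Scope ring_scope.

Definition is_bimodule (S : ringType) (M : zmodType)
  (l : S -> M -> M) (r : M -> S -> M) : Prop :=
  (forall a m n, l a (m + n) = l a m + l a n) /\
  (forall a b m, l (a + b) m = l a m + l b m) /\
  (forall m n a, r (m + n) a = r m a + r n a) /\
  (forall m a b, r m (a + b) = r m a + r m b) /\
  (forall a b m, l a (l b m) = l (a * b) m) /\
  (forall m a b, r (r m a) b = r m (a * b)) /\
  (forall a m b, l a (r m b) = r (l a m) b) /\
  (forall m, l 1 m = m) /\
  (forall m, r m 1 = m).

Definition two_torsion_free (M : zmodType) : Prop :=
  forall m : M, m *+ 2 = 0 -> m = 0.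

Definition additive_map (A B : zmodType) (h : A -> B) : Prop :=
  forall x y, h (x + y) = h x + h y.

Definition is_derivation (S : ringType) (d : S -> S) : Prop :=
  additive_map d /\ forall a b, d (a * b) = d a * b + a * d b.

Definition is_bimodule_hom (S : ringType) (M : zmodType)
  (l : S -> M -> M) (r : M -> S -> M) (f : S -> M) : Prop :=
  [/\ additive_map f,
      (forall a x, f (a * x) = l a (f x)) &
      (forall x b, f (x * b) = r (f x) b)].

Definition is_jordan_df_derivation (S : ringType) (M : zmodType)
  (l : S -> M -> M) (r : M -> S -> M) (d : S -> S) (f : S -> M) (D : S -> M) : Prop :=
  additive_map D /\ forall x, D (x * x) = r (D x) x + r (f x) (d x).

(* Main.v *)
Require Import Defs.
From mathcomp Require Import all_boot all_order all_algebra.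
Local Open Scope ring_scope.
Import GRing.Theory.

Lemma canc (M : zmodType) (a b p q c e : M) :
  a + b + p + p + q = a + p + (c + q) + (b + e) -> p = c + e.
Proof.
move=> H; apply: (@addrI _ (a + b + p + q)).
have -> : a + b + p + q + p = a + b + p + p + q by rewrite -addrA (addrC q p) addrA.
rewrite H -!addrA; apply: (congr1 (fun z => a + z)).
rewrite [RHS]addrCA; apply: (congr1 (fun z => p + z)).
rewrite [LHS]addrCA [RHS]addrCA; apply: (congr1 (fun z => q + z)).
by rewrite addrCA.
Qed.

Theorem lemma3p9 (R : comNzRingType) (S : algType R) (M : zmodType)
  (l : S -> M -> M) (r : M -> S -> M) (d : S -> S) (f : S -> M) (D : S -> M) :
  is_bimodule l r ->
  two_torsion_free M ->
  is_derivation d ->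
  is_bimodule_hom l r f ->
  is_jordan_df_derivation l r d f D ->
  forall x y : S, x * y = y * x ->
  D (x * y) = r (D x) y + r (f x) (d y).
Proof.
move=> [_ [_ [rDl [rDr [_ [rA [_ [_ r1]]]]]]]] _ [dD dM] [fD _ fr] [DD DJ].
have d1 : d 1 = 0.
  by apply: (@addrI _ (d 1)); rewrite addr0 -[in RHS](mulr1 1) dM mulr1 mul1r.
have r0 : forall m, r m 0 = 0.
  by move=> m; apply: (@addrI _ (r m 0)); rewrite -rDr !addr0.
have key : forall x, D x = r (D 1) x + r (f 1) (d x).
  move=> x; have H := DJ (x + 1).
  have E : (x + 1) * (x + 1) = x * x + x + x + 1.
    by rewrite mulrDl mulrDr mul1r mulr1 !addrA.
  rewrite E !DD DJ !fD dD d1 addr0 !rDl !rDr !r1 in H.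
  by apply: canc H.
move=> x y _.
have fx : f x = r (f 1) x by rewrite -fr mul1r.
by rewrite (key (x * y)) (key x) fx dM rDr rDl !rA addrA.
Qed.
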